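(* For every real operator ideal $\mathfrak R$ one has $(\mathfrak R_{\mathbb C})_{\mathbb R}=\mathfrak R$.
   Context: All Banach spaces are over $\mathbb R$. A Banach space with an $i$-operator is a pair $[X,A]$ with $X$ a real Banach space and $A:X\to X$ bounded linear with $A^2=-I_X$ and $\|\alpha x+\beta Ax\|=\|x\|$ whenever $\alpha^2+\beta^2=1$; these are exactly complex Banach spaces ($A$ = multiplication by $i$). A bounded linear $T:X\to Y$ with $TA=BT$ gives a complex operator $[T,A,B]:[X,A]\to[Y,B]$. A real (resp. complex) operator ideal in the sense of Pietsch assigns to each pair of real Banach spaces (resp. Banach spaces with an $i$-operator) a linear subspace of the bounded (resp. bounded complex-linear) operators between them containing all finite rank operators and stable under composition on either side with bounded (complex) operators. For a real Banach space $X$, its complexification is $[X\oplus X,N_X]$ with $N_X(x_1,x_2)=(-x_2,x_1)$ and norm $\|(x_1,x_2)\|=\left(\frac1{2\pi}\int_{-\pi}^{\pi}\|x_1\cos\phi+x_2\sin\phi\|^2d\phi\right)^{1/2}$. For a real operator ideal $\mathfrak R$, its complexification is the complex ideal $\mathfrak R_{\mathbb C}([X,A],[Y,B])=\{[T,A,B]: TA=BT,\ T\in\mathfrak R(X,Y)\}$. For a complex operator ideal $\mathfrak C$, its real form is the real ideal $\mathfrak C_{\mathbb R}(X,Y)=\{T:X\to Y \text{ bounded linear}: [T\oplus T,N_X,N_Y]\in\mathfrak C([X\oplus X,N_X],[Y\oplus Y,N_Y])\}$, where $(T\oplus T)(x_1,x_2)=(Tx_1,Tx_2)$. *)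

(* Defs.v *)
From HB Require Import structures.
From mathcomp Require Import all_boot all_order all_algebra.
From mathcomp Require Import all_classical all_reals all_analysis.
Set Implicit Arguments. Unset Strict Implicit. Unset Printing Implicit Defensive.
Import Order.TTheory GRing.Theory Num.Theory.
Import numFieldNormedType.Exports.
Local Open Scope classical_set_scope.
Local Open Scope ring_scope.

Section Defs.
Variable R : realType.

Definition bounded_linear (X Y : normedModType R) (T : X -> Y) : Prop :=
  (forall (a : R) (x y : X), T (a *: x + y) = a *: T x + T y) /\ continuous T.

Definition finite_rank (X Y : normedModType R) (T : X -> Y) : Prop :=
  exists (n : nat) (ys : 'I_n -> Y),
    forall x, exists c : 'I_n -> R, T x = \sum_(i < n) c i *: ys i.

Local Unset Implicit Arguments.
Record real_op_ideal := RealOpIdeal {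
  ideal_of :> forall X Y : completeNormedModType R, set (X -> Y);
  ideal_bounded : forall (X Y : completeNormedModType R) (T : X -> Y),
    ideal_of X Y T -> bounded_linear T;
  ideal_zero : forall X Y : completeNormedModType R,
    ideal_of X Y (fun _ => 0);
  ideal_add : forall (X Y : completeNormedModType R) (S T : X -> Y),
    ideal_of X Y S -> ideal_of X Y T -> ideal_of X Y (S \+ T);
  ideal_scale : forall (X Y : completeNormedModType R) (a : R) (T : X -> Y),
    ideal_of X Y T -> ideal_of X Y (fun x => a *: T x);
  ideal_finite_rank : forall (X Y : completeNormedModType R) (T : X -> Y),
    bounded_linear T -> finite_rank T -> ideal_of X Y T;
  ideal_comp : forall (W X Y Z : completeNormedModType R)
    (S : W -> X) (T : X -> Y) (U : Y -> Z),
    bounded_linear S -> bounded_linear U -> ideal_of X Y T ->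
    ideal_of W Z (U \o T \o S) }.
Local Set Implicit Arguments.

(* A complex operator ideal is given on pairs [X, A] (Banach space with an
   i-operator); we only need its underlying assignment. *)
Definition complex_assignment :=
  forall (X : completeNormedModType R) (A : X -> X)
         (Y : completeNormedModType R) (B : Y -> Y), set (X -> Y).

Definition cnorm2 (X : normedModType R) (x1 x2 : X) : \bar R :=
  (((2 * pi) ^-1)%:E *
   \int[lebesgue_measure]_(phi in `[(- pi : R)%R, pi]%classic)
      ((`|cos phi *: x1 + sin phi *: x2| ^+ 2)%:E))%E.

(* A complexification of X: a Banach space XC together with a linear
   bijection j : X * X -> XC (inverse jinv) which is isometric for the
   norm above, i.e. XC "is" X (+) X with the complexification norm. *)
Record complexification (X : completeNormedModType R) := Complexification {
  cspace : completeNormedModType R;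
  cinj : X * X -> cspace;
  cproj : cspace -> X * X;
  cinjK : cancel cinj cproj;
  cprojK : cancel cproj cinj;
  cinj_linear : forall (a : R) (u v : X * X),
     cinj (a *: u + v) = a *: cinj u + cinj v;
  cinj_norm : forall x1 x2 : X,
     ((`|cinj (x1, x2)| ^+ 2)%:E = cnorm2 x1 x2)%E }.

(* The i-operator N_X(x1, x2) = (-x2, x1) transported to the complexification *)
Definition cN (X : completeNormedModType R) (c : complexification X) :
  cspace c -> cspace c :=
  fun z => @cinj X c (- (@cproj X c z).2, (@cproj X c z).1).

Definition cT (X Y : completeNormedModType R) (cX : complexification X)
  (cY : complexification Y) (T : X -> Y) : cspace cX -> cspace cY :=
  fun z => @cinj Y cY (T (@cproj X cX z).1, T (@cproj X cX z).2).

Definition ideal_complexify (I : real_op_ideal) : complex_assignment :=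
  fun X A Y B T => (forall x, T (A x) = B (T x)) /\ I X Y T.

(* real form of a complex ideal; the complexification is unique up to
   isometric isomorphism, and we quantify over all of its realizations. *)
Definition real_form (C : complex_assignment) :
  forall X Y : completeNormedModType R, set (X -> Y) :=
  fun X Y T => forall (cX : complexification X) (cY : complexification Y),
    C (@cspace X cX) (@cN X cX) (@cspace Y cY) (@cN Y cY) (@cT X Y cX cY T).

End Defs.

Arguments ideal_of {R} r X Y _.
Arguments real_form {R} C X Y _.
Arguments ideal_complexify {R} I X A Y B _.

(* Main.v *)
Require Import Defs.
From HB Require Import structures.
From mathcomp Require Import all_boot all_order all_algebra.
From mathcomp Require Import all_classical all_reals all_analysis.
From mathcomp Require Import ring lra.
Unset Strict Implicit. Unset Printing Implicit Defensive.
Import Order.TTheory GRing.Theory Num.Theory.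
Import numFieldNormedType.Exports.
Local Open Scope classical_set_scope.
Local Open Scope ring_scope.
Section Int.
Variable R : realType.
Local Notation mu := (@lebesgue_measure R).
Definition DD : set R := `[(- pi)%R, pi].

Lemma mDD : measurable DD.
Proof. exact: measurable_itv. Qed.

Lemma intg (f : R -> R) : continuous f -> mu.-integrable DD (EFin \o f).
Proof.
move=> cf; apply: continuous_compact_integrable; first exact: segment_compact.
exact: continuous_subspaceT.
Qed.

Lemma intE (f : R -> R) : continuous f ->
  (\int[mu]_(x in DD) (f x)%:E)%E = (\int[mu]_(x in DD) f x)%:E.
Proof. by move=> cf; rewrite fineK // integrable_fin_num //; [exact: mDD| exact: intg]. Qed.

Lemma pi_gt0' : 0 < (pi : R). Proof. exact: pi_gt0. Qed.

Lemma muDD : fine (mu DD) = pi *+ 2.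
Proof.
rewrite /DD lebesgue_measure_itv /= ifT; last by rewrite lte_fin gtrN // pi_gt0.
by rewrite /= opprK mulr2n.
Qed.

Lemma int_cst (c : R) : \int[mu]_(x in DD) c = c * (pi *+ 2).
Proof. by rewrite Rintegral_cst ?muDD //; exact: mDD. Qed.

Lemma dsc : (fun x : R => sin x * cos x)^`()%classic = fun x => cos x ^+ 2 - sin x ^+ 2.
Proof.
apply/funext => x; rewrite derive1E.
have -> : (fun x : R => sin x * cos x) = (sin * cos)%R by [].
rewrite deriveM; [|exact: derivable_sin|exact: derivable_cos].
rewrite !derive_val.
rewrite /GRing.scale /=. rewrite !expr2. ring.
Qed.

Lemma cont_cos2 : continuous (fun x : R => cos x ^+ 2).
Proof. move=> x; rewrite (_ : (fun x => cos x ^+ 2) = cos \* cos); last by apply/funext => s; rewrite expr2.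
apply: continuousM; exact: continuous_cos. Qed.
Lemma cont_sin2 : continuous (fun x : R => sin x ^+ 2).
Proof. move=> x; rewrite (_ : (fun x => sin x ^+ 2) = sin \* sin); last by apply/funext => s; rewrite expr2.
apply: continuousM; exact: continuous_sin. Qed.

Lemma int_cs : \int[mu]_(x in DD) (cos x ^+ 2 - sin x ^+ 2) = 0.
Proof.
rewrite /Rintegral /DD (@continuous_FTC2 _ _ (fun x : R => sin x * cos x)).
- by rewrite sinN sinpi oppr0 !mul0r -EFinB subrr.
- exact: (gtrN (pi_gt0 R)).
- have cf : continuous (fun x : R => cos x ^+ 2 - sin x ^+ 2).
    by move=> x; exact: (continuousB (@cont_cos2 x) (@cont_sin2 x)).
  exact: continuous_subspaceT.
- have cF : continuous (fun x : R => sin x * cos x).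
    by move=> x; apply: continuousM; [exact: continuous_sin|exact: continuous_cos].
  split.
  + move=> x _; apply: derivableM; [exact: derivable_sin|exact: derivable_cos].
  + exact/cvg_at_right_filter/cF.
  + exact/cvg_at_left_filter/cF.
- by move=> x _; rewrite dsc.
Qed.

Lemma int_cos2 : \int[mu]_(x in DD) (cos x ^+ 2) = pi.
Proof.
have h1 := int_cs.
rewrite RintegralB in h1; [|exact: mDD|exact: intg cont_cos2|exact: intg cont_sin2].
have h2 : \int[mu]_(x in DD) (cos x ^+ 2 + sin x ^+ 2) = pi *+ 2.
  by under eq_Rintegral do rewrite cos2Dsin2; rewrite int_cst mul1r.
rewrite RintegralD in h2; [|exact: mDD|exact: intg cont_cos2|exact: intg cont_sin2].
move: h1 h2; rewrite mulr2n; lra.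
Qed.

Lemma int_sin2 : \int[mu]_(x in DD) (sin x ^+ 2) = pi.
Proof.
have h1 := int_cs.
rewrite RintegralB in h1; [|exact: mDD|exact: intg cont_cos2|exact: intg cont_sin2].
move: h1; rewrite int_cos2; lra.
Qed.

End Int.
Section Q.
Variables (R : realType) (X : normedModType R).
Local Notation mu := (@lebesgue_measure R).

Definition gg (x1 x2 : X) (t : R) : R := `|cos t *: x1 + sin t *: x2|.

Lemma cont_gg x1 x2 : continuous (gg x1 x2).
Proof.
move=> t; apply: (continuous_comp (f := fun t => cos t *: x1 + sin t *: x2)); last exact: norm_continuous.
apply: continuousD; apply: continuousZr_tmp; [exact: continuous_cos|exact: continuous_sin].
Qed.

Lemma cont_sq (f : R -> R) : continuous f -> continuous (fun t => f t ^+ 2).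
Proof. move=> cf t; rewrite (_ : (fun t => f t ^+ 2) = f \* f); last by apply/funext => s; rewrite expr2.
by apply: continuousM; exact: cf.
Qed.

Lemma cont_gg2 x1 x2 : continuous (fun t => gg x1 x2 t ^+ 2).
Proof. exact/cont_sq/cont_gg. Qed.

Definition II (x : X * X) : R := \int[mu]_(t in @DD R) (gg x.1 x.2 t ^+ 2).
Definition Qf (x : X * X) : R := (2 * pi)^-1 * II x.

Lemma cnorm2E x1 x2 : cnorm2 x1 x2 = (Qf (x1, x2))%:E.
Proof. by rewrite /cnorm2 /Qf /II (intE _ _ (cont_gg2 x1 x2)). Qed.

Lemma II_ge0 x : 0 <= II x.
Proof. by apply: Rintegral_ge0 => t _; rewrite sqr_ge0. Qed.

Lemma Qf_ge0 x : 0 <= Qf x.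
Proof. by rewrite /Qf mulr_ge0 ?II_ge0 // invr_ge0 mulr_ge0 // ltW // pi_gt0. Qed.

Lemma II_Z (a : R) x : II (a *: x) = a ^+ 2 * II x.
Proof.
rewrite /II -RintegralZl; [|exact: mDD|exact: intg _ _ (cont_gg2 _ _)].
apply: eq_Rintegral => t _; rewrite /gg /= !scalerA ![_ * a]mulrC -!scalerA -scalerDr normrZ.
by rewrite exprMn real_normK // num_real.
Qed.

Lemma Qf_Z (a : R) x : Qf (a *: x) = a ^+ 2 * Qf x.
Proof. by rewrite /Qf II_Z mulrCA. Qed.

Lemma II_le x : II x <= (`|x.1| + `|x.2|) ^+ 2 * (pi *+ 2).
Proof.
rewrite /II -(int_cst R); apply: le_Rintegral; [exact: mDD|exact: intg _ _ (cont_gg2 _ _)|exact: intg _ _ (fun _ => cvg_cst _)|].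
move=> t _; rewrite lerXn2r ?nnegrE ?addr_ge0 //.
  exact: normr_ge0.
rewrite /gg (le_trans (ler_normD _ _)) // lerD // normrZ ler_piMl //.
  exact: cos_max.
exact: sin_max.
Qed.

Lemma Qf_le x : Qf x <= (`|x.1| + `|x.2|) ^+ 2.
Proof.
rewrite /Qf ler_pdivrMl ?mulr_gt0 ?pi_gt0 //.
have := II_le x; by rewrite mulrC mulr_natl.
Qed.


Lemma II_refl x : II x = \int[mu]_(t in @DD R) (gg x.1 x.2 (- t) ^+ 2).
Proof.
rewrite /II /Rintegral /DD.
have := @integration_by_substitution_oppr R (fun t => gg x.1 x.2 t ^+ 2) (- pi) pi.
rewrite opprK => ->. by [].
- have := pi_gt0 R; lra.
- exact/continuous_subspaceT/cont_gg2.
Qed.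

Lemma gg_sym x1 x2 t : `|(2 * cos t) *: x1| <= gg x1 x2 t + gg x1 x2 (- t).
Proof.
rewrite /gg cosN sinN scaleNr.
have -> : (2 * cos t) *: x1 = (cos t *: x1 + sin t *: x2) + (cos t *: x1 - sin t *: x2).
  by rewrite addrACA subrr addr0 -scalerDl; congr (_ *: _); ring.
exact: ler_normD.
Qed.

Lemma gg_asym x1 x2 t : `|(2 * sin t) *: x2| <= gg x1 x2 t + gg x1 x2 (- t).
Proof.
rewrite /gg cosN sinN scaleNr.
have -> : (2 * sin t) *: x2 = (cos t *: x1 + sin t *: x2) - (cos t *: x1 - sin t *: x2).
  by rewrite opprB addrCA !addrA (addrAC (sin t *: x2) (cos t *: x1)) addrK -scalerDl; congr (_ *: _); ring.
exact: ler_normB.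
Qed.

Lemma sq_le (a b c : R) : 0 <= c -> c <= a + b -> 0 <= a -> 0 <= b -> c ^+ 2 <= 2 * (a ^+ 2 + b ^+ 2).
Proof.
move=> c0 cab a0 b0; have h := ler_pM c0 c0 cab cab.
have h2 := sqr_ge0 (a - b); rewrite !expr2 in h2 *; nra.
Qed.

Lemma cont_ggN x1 x2 : continuous (fun t => gg x1 x2 (- t) ^+ 2).
Proof.
apply: cont_sq => t; apply: (continuous_comp (f := -%R)); last exact: cont_gg.
exact: opp_continuous.
Qed.

Lemma cont_cM (c : R) (f : R -> R) : continuous f -> continuous (fun t => c * f t).
Proof. move=> cf t; apply: continuousM; [exact: cvg_cst|exact: cf]. Qed.

Lemma cont_D (f g : R -> R) : continuous f -> continuous g -> continuous (fun t => f t + g t).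
Proof. move=> cf cg t; apply: continuousD; [exact: cf|exact: cg]. Qed.

Lemma lower_gen x (h : R -> R) (v : X) : continuous (fun t => h t ^+ 2) ->
  (forall t, `|(2 * h t) *: v| <= gg x.1 x.2 t + gg x.1 x.2 (- t)) ->
  \int[mu]_(t in @DD R) (h t ^+ 2) = pi ->
  `|v| ^+ 2 <= 2 * Qf x.
Proof.
move=> ch hle hint.
have key : \int[mu]_(t in @DD R) (4 * `|v| ^+ 2 * h t ^+ 2) <=
   \int[mu]_(t in @DD R) (2 * (gg x.1 x.2 t ^+ 2 + gg x.1 x.2 (- t) ^+ 2)).
  apply: le_Rintegral.
  - exact: mDD.
  - exact/intg/cont_cM.
  - exact/intg/cont_cM/cont_D/cont_ggN/cont_gg2.
  - move=> t _.
    have hl : `|2 * h t| * `|v| <= gg x.1 x.2 t + gg x.1 x.2 (- t) by rewrite -normrZ; exact: hle.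
    have := @sq_le (gg x.1 x.2 t) (gg x.1 x.2 (-t)) (`|2 * h t| * `|v|)
      (mulr_ge0 (normr_ge0 _) (normr_ge0 _)) hl
      (normr_ge0 _) (normr_ge0 _).
    suff -> : 4 * `|v| ^+ 2 * h t ^+ 2 = (`|2 * h t| * `|v|) ^+ 2 by [].
    by rewrite !exprMn !real_normK ?num_real //; ring.
rewrite RintegralZl in key; [|exact: mDD|]; last first.
  exact/intg/cont_D/cont_ggN/cont_gg2.
rewrite RintegralZl in key; [|exact: mDD|exact: intg _ _ ch].
rewrite RintegralD in key; [|exact: mDD|exact: intg _ _ (cont_gg2 _ _)|exact: intg _ _ (cont_ggN _ _)].
rewrite hint -II_refl -/(II x) in key.
rewrite /Qf.
have pi0 := pi_gt0 R.
have -> : 2 * ((2 * pi)^-1 * II x) = II x / pi.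
  by rewrite invfM -mulrA mulrA mulfV // mul1r mulrC.
rewrite ler_pdivlMr //; lra.
Qed.

Lemma lower1 x : `|x.1| ^+ 2 <= 2 * Qf x.
Proof.
apply: (lower_gen x cos); [exact: cont_cos2 | | exact: int_cos2].
move=> t; exact: gg_sym.
Qed.

Lemma lower2 x : `|x.2| ^+ 2 <= 2 * Qf x.
Proof.
apply: (lower_gen x sin); [exact: cont_sin2 | | exact: int_sin2].
move=> t; exact: gg_asym.
Qed.

End Q.
Arguments gg {R X}. Arguments II {R X}. Arguments Qf {R X}.

Section Tri.
Variables (R : realType) (X : normedModType R).
Local Notation mu := (@lebesgue_measure R).

Lemma sq_ineq (a b c s : R) : 0 <= c -> c <= a + b -> 0 <= a -> 0 <= b -> 0 < s ->
  c ^+ 2 <= (1 + s) * a ^+ 2 + (1 + s^-1) * b ^+ 2.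
Proof.
move=> c0 cab a0 b0 s0.
have h := ler_pM c0 c0 cab cab.
have u0 : 0 < s^-1 by rewrite invr_gt0.
have k : 0 <= s^-1 * (s * a - b) ^+ 2 by rewrite mulr_ge0 ?sqr_ge0 // ltW.
have e : s^-1 * (s * a - b) ^+ 2 = s * a ^+ 2 - 2 * a * b + s^-1 * b ^+ 2.
  by field; rewrite gt_eqF.
rewrite e in k; rewrite !expr2 in k *; nra.
Qed.

Lemma gg_tri (x y : X * X) t : gg (x + y).1 (x + y).2 t <= gg x.1 x.2 t + gg y.1 y.2 t.
Proof.
rewrite /gg /= !scalerDr addrACA; exact: ler_normD.
Qed.

Lemma Qf_eq0 (x : X * X) : Qf x = 0 -> x = 0.
Proof.
move=> h; have h1 := lower1 _ _ x; have h2 := lower2 _ _ x; rewrite h mulr0 in h1 h2.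
have e1 : `|x.1| = 0.
  apply/eqP; rewrite -sqrf_eq0; apply/eqP/le_anti; rewrite h1 /=; exact: sqr_ge0.
have e2 : `|x.2| = 0.
  apply/eqP; rewrite -sqrf_eq0; apply/eqP/le_anti; rewrite h2 /=; exact: sqr_ge0.
move: e1 e2 => /normr0_eq0 e1 /normr0_eq0 e2.
by move: e1 e2; clear; case: x => a b /= -> ->.
Qed.

Lemma Qf0 : Qf (0 : X * X) = 0.
Proof.
apply/le_anti; rewrite Qf_ge0 andbT; apply: (le_trans (Qf_le _ _ _)).
by rewrite /= normr0 addr0 expr2 mulr0.
Qed.

Lemma Qf_tri (x y : X * X) : Qf (x + y) <= (Num.sqrt (Qf x) + Num.sqrt (Qf y)) ^+ 2.
Proof.
have [->|nx] := eqVneq x 0.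
  by rewrite add0r Qf0 sqrtr0 add0r sqr_sqrtr // Qf_ge0.
have [->|ny] := eqVneq y 0.
  by rewrite addr0 Qf0 sqrtr0 addr0 sqr_sqrtr // Qf_ge0.
have A0 : 0 < Qf x.
  rewrite lt_neqAle Qf_ge0 andbT eq_sym; apply/negP => /eqP /Qf_eq0 h; by rewrite h eqxx in nx.
have C0 : 0 < Qf y.
  rewrite lt_neqAle Qf_ge0 andbT eq_sym; apply/negP => /eqP /Qf_eq0 h; by rewrite h eqxx in ny.
set a := Num.sqrt (Qf x); set c := Num.sqrt (Qf y).
have a0 : 0 < a by rewrite sqrtr_gt0.
have c0 : 0 < c by rewrite sqrtr_gt0.
have eA : Qf x = a ^+ 2 by rewrite sqr_sqrtr // Qf_ge0.
have eC : Qf y = c ^+ 2 by rewrite sqr_sqrtr // Qf_ge0.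
pose s := c / a.
have s0 : 0 < s by rewrite divr_gt0.
have key : II (x + y) <= (1 + s) * II x + (1 + s^-1) * II y.
  rewrite /II -RintegralZl; [|exact: mDD|exact: intg _ _ (cont_gg2 _ _ _ _)].
  rewrite -RintegralZl; [|exact: mDD|exact: intg _ _ (cont_gg2 _ _ _ _)].
  rewrite -RintegralD; [|exact: mDD|exact/intg/cont_cM/cont_gg2|exact/intg/cont_cM/cont_gg2].
  apply: le_Rintegral; [exact: mDD|exact: intg _ _ (cont_gg2 _ _ _ _)| |].
    exact/intg/cont_D/cont_cM/cont_gg2/cont_cM/cont_gg2.
  move=> t _; apply: sq_ineq => //; [exact: normr_ge0|exact: gg_tri|exact: normr_ge0|exact: normr_ge0].
have k0 : 0 < (2 * pi)^-1 :> R by rewrite invr_gt0 mulr_gt0 // pi_gt0.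
have : Qf (x + y) <= (1 + s) * Qf x + (1 + s^-1) * Qf y.
  rewrite /Qf mulrCA (mulrCA (1 + s^-1)) -mulrDr ler_pM2l //.
rewrite eA eC => h; apply: (le_trans h).
have -> : (1 + s) * a ^+ 2 + (1 + s^-1) * c ^+ 2 = (a + c) ^+ 2.
  by rewrite /s; field; rewrite !gt_eqF.
exact: lexx.
Qed.

End Tri.
Section CT.
Variables (R : realType) (X : completeNormedModType R).

Definition cxt := (X * X)%type.
HB.instance Definition _ := GRing.Lmodule.on cxt.

Definition cn (z : cxt) : R := Num.sqrt (Qf (z : X * X)).

Lemma cn_tri (x y : cxt) : cn (x + y) <= cn x + cn y.
Proof.
rewrite /cn -(@ger0_norm _ (_ + _)) ?addr_ge0 ?sqrtr_ge0 //.
rewrite -sqrtr_sqr ler_sqrt; [exact: Qf_tri|exact: sqr_ge0].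
Qed.

Lemma cn_Z (l : R) (x : cxt) : cn (l *: x) = `|l| * cn x.
Proof.
by rewrite /cn (Qf_Z _ _ l x) sqrtrM ?sqr_ge0 // sqrtr_sqr.
Qed.

Lemma cn_eq0 (x : cxt) : cn x = 0 -> x = 0.
Proof.
move=> /eqP; rewrite /cn sqrtr_eq0 => h; apply: Qf_eq0.
by apply/le_anti; rewrite h Qf_ge0.
Qed.

HB.instance Definition _ := Lmodule_isNormed.Build R cxt cn_tri cn_Z cn_eq0.

Lemma cxt_normE (z : cxt) : `|z| = Num.sqrt (Qf (z : X * X)).
Proof. by []. Qed.


Lemma cxt_le1 (z : cxt) : `|(z : X * X).1| <= 2 * `|z|.
Proof.
have h := lower1 _ _ (z : X * X); rewrite -(@sqr_sqrtr _ (Qf _)) ?Qf_ge0 // -cxt_normE in h.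
have := normr_ge0 z; have := normr_ge0 (z : X * X).1; rewrite !expr2 in h; nra.
Qed.

Lemma cxt_le2 (z : cxt) : `|(z : X * X).2| <= 2 * `|z|.
Proof.
have h := lower2 _ _ (z : X * X); rewrite -(@sqr_sqrtr _ (Qf _)) ?Qf_ge0 // -cxt_normE in h.
have := normr_ge0 z; have := normr_ge0 (z : X * X).2; rewrite !expr2 in h; nra.
Qed.

Lemma cxt_ge (z : cxt) : `|z| <= `|(z : X * X).1| + `|(z : X * X).2|.
Proof.
rewrite cxt_normE -(@ger0_norm _ (_ + _)) ?addr_ge0 // -sqrtr_sqr ler_sqrt ?sqr_ge0 //.
exact: Qf_le.
Qed.

Lemma cxt_complete (F : set_system cxt) : ProperFilter F -> cauchy F -> cvg F.
Proof.
move=> FF /cauchyP Fc.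
have c1 : cauchy (fst @ F : set_system X).
  apply: cauchy_exP => e e0.
  have [x Fx] := Fc (e / 2) (divr_gt0 e0 (ltr0Sn R 1)).
  exists (x : X * X).1; rewrite /= /fmap /=.
  apply: filterS Fx => z hz. rewrite -ball_normE /ball_ /=. move: hz; rewrite -ball_normE /ball_ /= => hz.
  have := cxt_le1 (x - z); rewrite /= => h.
  apply: le_lt_trans h _; lra.
have c2 : cauchy (snd @ F : set_system X).
  apply: cauchy_exP => e e0.
  have [x Fx] := Fc (e / 2) (divr_gt0 e0 (ltr0Sn R 1)).
  exists (x : X * X).2; rewrite /= /fmap /=.
  apply: filterS Fx => z hz. rewrite -ball_normE /ball_ /=. move: hz; rewrite -ball_normE /ball_ /= => hz.
  have := cxt_le2 (x - z); rewrite /= => h.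
  apply: le_lt_trans h _; lra.
have [l1 hl1] := iffLR (cvg_ex _) (cauchy_cvg _ c1).
have [l2 hl2] := iffLR (cvg_ex _) (cauchy_cvg _ c2).
apply/cvg_ex; exists ((l1, l2) : cxt).
apply/fcvg_ballP => e e0.
move/fcvg_ballP : hl1 => /(_ (e / 2) (divr_gt0 e0 (ltr0Sn R 1))) h1.
move/fcvg_ballP : hl2 => /(_ (e / 2) (divr_gt0 e0 (ltr0Sn R 1))) h2.
have h1' : F [set z : cxt | ball l1 (e / 2) (z : X * X).1] := h1.
have h2' : F [set z : cxt | ball l2 (e / 2) (z : X * X).2] := h2.
apply: filterS (filterI h1' h2') => z [hz1 hz2].
move: hz1 hz2; rewrite -!ball_normE /ball_ /= => hz1 hz2.

have := cxt_ge ((l1, l2) - z); rewrite /= => h.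
apply: le_lt_trans h _; lra.
Qed.

HB.instance Definition _ := Uniform_isComplete.Build cxt cxt_complete.

End CT.
Section Main.
Variable R : realType.

Lemma lin_bnd_cont (V W : normedModType R) (f : V -> W) (k : R) :
  (forall (a : R) x y, f (a *: x + y) = a *: f x + f y) ->
  (forall x, `|f x| <= k * `|x|) -> continuous f.
Proof.
move=> fl fk x.
have fB : forall u v, f (u - v) = f u - f v.
  by move=> u v; rewrite addrC -scaleN1r fl scaleN1r addrC.
have k0 : 0 <= `|k| by exact: normr_ge0.
have kk : k <= `|k| by exact: ler_norm.
apply/cvgrPdist_lt => e e0.
have ke : 0 < e / (`|k| + 1) by rewrite divr_gt0 // ltr_wpDl.
near=> y.
rewrite -fB; apply: (le_lt_trans (fk _)).
have : `|x - y| < e / (`|k| + 1) by near: y; exact: cvgr_dist_lt.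
rewrite ltr_pdivlMr ?ltr_wpDl // => h.
have := normr_ge0 (x - y); nra.
Unshelve. all: by end_near.
Qed.

Definition stdcx (X : completeNormedModType R) : complexification X.
Proof.
refine (@Complexification R X (cxt R X) id id (fun _ => erefl) (fun _ => erefl) (fun _ _ _ => erefl) _).
move=> x1 x2; rewrite cnorm2E /= (cxt_normE R X (x1, x2)) sqr_sqrtr // Qf_ge0 //.
Defined.


Section Gen.
Variables (X : completeNormedModType R) (c : complexification X).
Local Notation ci := (@cinj R X c).
Local Notation cp := (@cproj R X c).

Lemma ci_normE (p : X * X) : `|ci p| = Num.sqrt (Qf p).
Proof.
case: p => x1 x2; have := @cinj_norm R X c x1 x2; rewrite cnorm2E => -[] <-.
by rewrite sqrtr_sqr normr_id.
Qed.

Lemma cp_lin (a : R) u v : cp (a *: u + v) = a *: cp u + cp v.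
Proof.
apply: (can_inj (@cinjK R X c)); rewrite @cinj_linear !@cprojK //.
Qed.

Lemma cp_bnd1 z : `|(cp z).1| <= 2 * `|z|.
Proof.
have e : `|z| = Num.sqrt (Qf (cp z)) by rewrite -ci_normE cprojK.
have h := lower1 _ _ (cp z); rewrite -(@sqr_sqrtr _ (Qf _)) ?Qf_ge0 // -e in h.
have := normr_ge0 z; have := normr_ge0 (cp z).1; rewrite !expr2 in h; nra.
Qed.

Lemma cp_bnd2 z : `|(cp z).2| <= 2 * `|z|.
Proof.
have e : `|z| = Num.sqrt (Qf (cp z)) by rewrite -ci_normE cprojK.
have h := lower2 _ _ (cp z); rewrite -(@sqr_sqrtr _ (Qf _)) ?Qf_ge0 // -e in h.
have := normr_ge0 z; have := normr_ge0 (cp z).2; rewrite !expr2 in h; nra.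
Qed.

Lemma ci_bnd (p : X * X) : `|ci p| <= `|p.1| + `|p.2|.
Proof.
rewrite ci_normE -(@ger0_norm _ (_ + _)) ?addr_ge0 // -sqrtr_sqr ler_sqrt ?sqr_ge0 //.
exact: Qf_le.
Qed.

Lemma bl_S1 : bounded_linear (fun z => (cp z).1).
Proof.
have l : forall (a : R) x y, (cp (a *: x + y)).1 = a *: (cp x).1 + (cp y).1.
  by move=> a x y; rewrite cp_lin.
split => //; apply: (lin_bnd_cont _ _ _ 2 l); exact: cp_bnd1.
Qed.

Lemma bl_S2 : bounded_linear (fun z => (cp z).2).
Proof.
have l : forall (a : R) x y, (cp (a *: x + y)).2 = a *: (cp x).2 + (cp y).2.
  by move=> a x y; rewrite cp_lin.
split => //; apply: (lin_bnd_cont _ _ _ 2 l); exact: cp_bnd2.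
Qed.

Lemma bl_U1 : bounded_linear (fun x : X => ci (x, 0)).
Proof.
have l : forall (a : R) x y, ci (a *: x + y, 0) = a *: ci (x, 0) + ci (y, 0).
  move=> a x y; rewrite -cinj_linear; congr ci.
  by apply: injective_projections; rewrite /= ?scaler0 ?addr0.
split => //; apply: (lin_bnd_cont _ _ _ 1 l) => x.
by rewrite mul1r (le_trans (ci_bnd _)) //= normr0 addr0.
Qed.

Lemma bl_U2 : bounded_linear (fun x : X => ci (0, x)).
Proof.
have l : forall (a : R) x y, ci (0, a *: x + y) = a *: ci (0, x) + ci (0, y).
  move=> a x y; rewrite -cinj_linear; congr ci.
  by apply: injective_projections; rewrite /= ?scaler0 ?addr0.
split => //; apply: (lin_bnd_cont _ _ _ 1 l) => x.
by rewrite mul1r (le_trans (ci_bnd _)) //= normr0 add0r.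
Qed.

End Gen.
End Main.

Theorem theorem1 (R : realType) (I : real_op_ideal R)
  (X Y : completeNormedModType R) :
  real_form (ideal_complexify I) X Y = I X Y.
Proof.
apply/funext => T; apply/propext; split.
- move=> h; have [_ hc] := h (stdcx _ X) (stdcx _ Y).
  have -> : T = (fun z => (@cproj R Y (stdcx _ Y) z).1) \o
      (@cT R X Y (stdcx _ X) (stdcx _ Y) T) \o (fun x => @cinj R X (stdcx _ X) (x, 0)).
    by apply/funext.
  apply: ideal_comp => //; [exact: bl_U1|exact: bl_S1].
- move=> hT cX cY.
  have [lin _] := ideal_bounded _ _ _ _ _ hT.
  have T0 : T 0 = 0.
    have := lin 1 0 0; rewrite !scale1r addr0 => h.
    by apply: (addrI (T 0)); rewrite addr0 -h.
  have TN : forall x, T (- x) = - T x.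
    by move=> x; have := lin (-1) x 0; rewrite T0 !addr0 !scaleN1r.
  split.
  + move=> z; rewrite /cT /cN !cinjK /= TN //.
  + have -> : @cT R X Y cX cY T =
        ((fun y => @cinj R Y cY (y, 0)) \o T \o (fun z => (@cproj R X cX z).1)) \+
        ((fun y => @cinj R Y cY (0, y)) \o T \o (fun z => (@cproj R X cX z).2)).
      apply/funext => z; rewrite /cT /=.
      rewrite -[X in X + _]scale1r -cinj_linear; congr (@cinj R Y cY).
      by apply: injective_projections; rewrite /= scale1r ?addr0 ?add0r.
    apply: ideal_add; apply: ideal_comp => //;
      [exact: bl_S1|exact: bl_U1|exact: bl_S2|exact: bl_U2].
Qed.
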